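(* Let $\theta\in\mathbb{R}$ with $\omega_0:=\cos\theta\neq 0$, and put $\gamma=\sin\theta$. Let $|u_1\rangle=\tfrac{1}{\sqrt2}\begin{pmatrix}1\\1\end{pmatrix}$, $|u_2\rangle=\tfrac{1}{\sqrt2}\begin{pmatrix}1\\-1\end{pmatrix}$, let $T=\cos\tfrac{\theta}{2}\,\mathbf 1_2-2\sin\tfrac{\theta}{2}\,\sigma_2$, and let $|\phi_j\rangle=\omega_0T|u_j\rangle$, $|\chi_j\rangle=(T^{-1})^{\dagger}|u_j\rangle$. For $m=1,2,3$ define the $2\times2$ matrices $$\sigma_m^{\gamma}=\frac{i^{m+1}}{2}\sum_{j,k=1}^{2}\frac{c^{(m)}_{jk}}{\omega_0^{\delta_{m2}}}\,|\phi_j\rangle\langle\chi_k|.$$ Then for all $l,m\in\{1,2,3\}$, $$[\sigma_l^{\gamma},\sigma_m^{\gamma}]=i\sum_{n=1}^{3}\epsilon_{lmn}\,(1-\gamma^2\delta_{n2})\,\sigma_n^{\gamma}.$$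
   Context: Here $\langle\chi_k|$ is the conjugate transpose of $|\chi_k\rangle$, $\dagger$ is conjugate transpose, $\sigma_2=\tfrac12\begin{pmatrix}0&-i\\ i&0\end{pmatrix}$, $\epsilon_{lmn}$ is the Levi-Civita symbol and $\delta$ the Kronecker delta. The coefficient matrices are $c^{(m)}=(c^{(m)}_{jk})_{j,k=1,2}$ with $c^{(1)}_{jk}=(-1)^j\delta_{jk}$, $c^{(3)}_{jk}=1-(-1)^jc^{(1)}_{jk}$ and $c^{(2)}_{jk}=(-1)^jc^{(3)}_{jk}$, i.e. $c^{(1)}=\begin{pmatrix}-1&0\\0&1\end{pmatrix}$, $c^{(2)}=\begin{pmatrix}0&-1\\1&0\end{pmatrix}$, $c^{(3)}=\begin{pmatrix}0&1\\1&0\end{pmatrix}$. *)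

(* Defs.v *)
From HB Require Import structures.
From mathcomp Require Import all_boot all_order all_algebra.
From mathcomp Require Import reals trigo.
From mathcomp Require Import complex.
Set Implicit Arguments. Unset Strict Implicit. Unset Printing Implicit Defensive.
Import Order.TTheory GRing.Theory Num.Theory.
Local Open Scope ring_scope.

Section Defs.
Variable R : realType.
Local Notation C := R[i].
Local Notation iC := (@Complex R 0 1).

Definition rc (x : R) : C := Complex x 0.

Definition dagger m n (A : 'M[C]_(m, n)) : 'M[C]_(n, m) :=
  (map_mx (@conjc R) A)^T.

(* |u_1> = (1,1)/sqrt 2, |u_2> = (1,-1)/sqrt 2 ; index j : 'I_2 with
   j = 0 <-> u_1, j = 1 <-> u_2 *)
Definition uvec (j : 'I_2) : 'cV[C]_2 :=
  \col_r ((rc (Num.sqrt 2))^-1 *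
                 (if (r == 1%N :> nat) && (j == 1%N :> nat) then -1 else 1)).

Definition sigma2 : 'M[C]_2 :=
  \matrix_(r, c) (2^-1 *
     (if (r == 0%N :> nat) && (c == 1%N :> nat) then - iC
      else if (r == 1%N :> nat) && (c == 0%N :> nat) then iC else 0)).

Definition Tmat (theta : R) : 'M[C]_2 :=
  (rc (cos (theta / 2))) *: 1%:M - (rc (2 * sin (theta / 2))) *: sigma2.

Definition omega0 (theta : R) : R := cos theta.
Definition gam (theta : R) : R := sin theta.

Definition phivec (theta : R) (j : 'I_2) : 'cV[C]_2 :=
  rc (omega0 theta) *: (Tmat theta *m uvec j).
Definition chivec (theta : R) (j : 'I_2) : 'cV[C]_2 :=
  dagger (invmx (Tmat theta)) *m uvec j.

(* coefficient matrices c^(m), m : 'I_3 with index 0,1,2 <-> m = 1,2,3;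
   j,k : 'I_2 with index 0,1 <-> 1,2.  Defined by the paper's formulas:
   c1_jk = (-1)^j delta_jk, c3_jk = 1 - (-1)^j c1_jk, c2_jk = (-1)^j c3_jk *)
Definition sgn1 (j : 'I_2) : C := (-1) ^+ (j.+1).
Definition delta2 (j k : 'I_2) : C := if j == k then 1 else 0.
Definition c1 (j k : 'I_2) : C := sgn1 j * delta2 j k.
Definition c3 (j k : 'I_2) : C := 1 - sgn1 j * c1 j k.
Definition c2 (j k : 'I_2) : C := sgn1 j * c3 j k.
Definition ccoef (m : 'I_3) (j k : 'I_2) : C :=
  if m == 0%N :> nat then c1 j k else if m == 1%N :> nat then c2 j k else c3 j k.

(* Kronecker delta_{m2} (index 1 <-> m = 2) *)
Definition deltam2 (m : 'I_3) : nat := if m == 1%N :> nat then 1%N else 0%N.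

(* sigma_m^gamma = i^(m+1)/2 sum_{j,k} c^(m)_jk / omega0^(delta_m2) |phi_j><chi_k| ;
   for index m : 'I_3 the paper's m is m.+1, so i^(m+1) = i^(m.+2) *)
Definition sigmag (theta : R) (m : 'I_3) : 'M[C]_2 :=
  (iC ^+ (m.+2) / 2) *:
    \sum_(j < 2) \sum_(k < 2)
      (ccoef m j k / rc (omega0 theta) ^+ deltam2 m) *:
        (phivec theta j *m dagger (chivec theta k)).

Definition levi (l m n : 'I_3) : C :=
  if (l == m) || (m == n) || (l == n) then 0
  else if ((l.+1 %% 3 == m) && (m.+1 %% 3 == n))%N then 1 else -1.

Definition commut (A B : 'M[C]_2) : 'M[C]_2 := A *m B - B *m A.
End Defs.

(* Main.v *)
Require Import Defs.
From HB Require Import structures.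
From mathcomp Require Import all_boot all_order all_algebra.
From mathcomp Require Import reals trigo.
From mathcomp Require Import complex.
From mathcomp Require Import ring.
Import Order.TTheory GRing.Theory Num.Theory.
Local Open Scope ring_scope.
Section S.
Variable R : realType.
Local Notation C := R[i].
Local Notation iC := (@Complex R 0 1).
Lemma hi : iC * iC = -1 :> C.
Proof. by rewrite -expr2 sqr_i. Qed.
Lemma h2 : (2:C) * 2^-1 = 1. Proof. by rewrite mulfV // pnatr_eq0. Qed.
Lemma rcE (x : R) : rc x = real_complex R x. Proof. by []. Qed.
Lemma rcM (x y : R) : rc (x * y) = rc x * rc y. Proof. by rewrite !rcE rmorphM. Qed.
Lemma rcB (x y : R) : rc (x - y) = rc x - rc y. Proof. by rewrite !rcE rmorphB. Qed.
Lemma rcX (x : R) n : rc (x ^+ n) = rc x ^+ n. Proof. by rewrite !rcE rmorphXn. Qed.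
Lemma rcn n : rc (n%:R : R) = n%:R. Proof. by rewrite rcE rmorph_nat. Qed.
Lemma rc1 : rc (1:R) = 1. Proof. by rewrite !rcE rmorph1. Qed.
Lemma rcV (x : R) : rc (x^-1) = (rc x)^-1. Proof. by rewrite !rcE fmorphV. Qed.
Lemma conj_rc (x : R) : conjc (rc x) = rc x. Proof. exact: conjc_real. Qed.
Lemma rc_eq0 (x : R) : (rc x == 0) = (x == 0). Proof. by rewrite rcE eq_complex /= eqxx andbT. Qed.
Lemma dagger_mul m n p (A : 'M[C]_(m,n)) (B : 'M[C]_(n,p)) : dagger (A *m B) = dagger B *m dagger A.
Proof. by rewrite /dagger map_mxM trmx_mul. Qed.
Lemma daggerK m n (A : 'M[C]_(m,n)) : dagger (dagger A) = A.
Proof. by apply/matrixP=> i j; rewrite /dagger !mxE conjcK. Qed.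
Variable theta : R.
Local Notation T := (Tmat theta).
Local Notation w := (rc (omega0 theta)).
Let c := rc (cos (theta / 2)).
Let s := rc (sin (theta / 2)).

Lemma w_cs : w = c ^+ 2 - s ^+ 2.
Proof.
rewrite /omega0 /c /s -!rcX -rcB -cosD; congr (rc (cos _)).
by rewrite -splitr.
Qed.

Definition Tadj : 'M[C]_2 := \matrix_(r, k)
  (if r == k then c else if r == 0 :> 'I_2 then - iC * s else iC * s).

Lemma TTadj : T *m Tadj = w%:M.
Proof.
apply/matrixP => r k; rewrite !mxE !big_ord_recr big_ord0 /= !mxE.
rewrite w_cs.
case: r => [[|[|//]] ?]; case: k => [[|[|//]] ?] /=;
rewrite /s rcM rcn /c ?mulr1n ?mulr0n; field: hi; rewrite ?pnatr_eq0 //.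
Qed.
Lemma w_neq0 : omega0 theta != 0 -> w != 0.
Proof. by rewrite rc_eq0. Qed.

Lemma Tunit : omega0 theta != 0 -> T \in unitmx.
Proof.
move=> hw.
have : T *m (w^-1 *: Tadj) = 1%:M.
  by rewrite -scalemxAr TTadj scale_scalar_mx mulVf // w_neq0.
by case/mulmx1_unit.
Qed.

Lemma phichi j k : phivec theta j *m dagger (chivec theta k)
   = w *: (T *m (uvec R j *m dagger (uvec R k)) *m invmx T).
Proof. by rewrite /phivec /chivec dagger_mul daggerK -scalemxAl !mulmxA. Qed.

Definition Q (m : 'I_3) : 'M[C]_2 :=
  \sum_(j < 2) \sum_(k < 2) ccoef R m j k *: (uvec R j *m dagger (uvec R k)).

Lemma sigmagE m : sigmag theta m =
  (iC ^+ (m.+2) / 2 * (w / w ^+ deltam2 m)) *: (T *m Q m *m invmx T).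
Proof.
rewrite /sigmag /Q mulmx_sumr mulmx_suml -[in RHS]scalerA; congr (_ *: _).
rewrite scaler_sumr; apply: eq_bigr => j _.
rewrite mulmx_sumr mulmx_suml scaler_sumr; apply: eq_bigr => k _.
rewrite phichi scalerA -scalemxAr -scalemxAl scalerA; congr (_ *: _).
ring.
Qed.

Lemma commut_scale (a b : C) (A B : 'M[C]_2) :
  commut (a *: A) (b *: B) = (a * b) *: commut A B.
Proof.
by rewrite /commut -!scalemxAl -!scalemxAr !scalerA scalerBr [b * a]mulrC.
Qed.

Lemma commut_conj_gen (P K A B : 'M[C]_2) : K *m P = 1%:M ->
  commut (P *m A *m K) (P *m B *m K) = P *m commut A B *m K.
Proof.
move=> hK.
by rewrite /commut mulmxBr mulmxBl !mulmxA -!(mulmxA _ K P) hK !mulmx1.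
Qed.

Lemma commut_conj (A B : 'M[C]_2) : omega0 theta != 0 ->
  commut (T *m A *m invmx T) (T *m B *m invmx T) = T *m commut A B *m invmx T.
Proof. by move=> hw; apply: commut_conj_gen; rewrite mulVmx // Tunit. Qed.
Definition qv (m : 'I_3) (r k : 'I_2) : C :=
  if m == 0 :> nat then (if r == k then 0 else -2)
  else if m == 1 :> nat then (if r == k then 0 else if r == 0 :> nat then 2 else -2)
  else (if r == k then (if r == 0 :> nat then 2 else -2) else 0).
Definition Qp (m : 'I_3) : 'M[C]_2 := \matrix_(r, k) qv m r k.

Lemma sqrt2_neq0 : rc (Num.sqrt (2:R)) != 0.
Proof. by rewrite rc_eq0 sqrtr_eq0 -ltNge ltr0n. Qed.

Lemma vv : (rc (Num.sqrt (2:R)))^-1 * (rc (Num.sqrt 2))^-1 = 2^-1 :> C.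
Proof. by rewrite -invfM -rcM -expr2 sqr_sqrtr ?ler0n // rcn. Qed.

Lemma conjv : conjc (rc (Num.sqrt (2:R)))^-1 = (rc (Num.sqrt (2:R)))^-1.
Proof. by rewrite fmorphV; congr (_^-1); apply: conj_rc. Qed.

Lemma conj_vs (b : bool) : conjc ((rc (Num.sqrt (2:R)))^-1 * (if b then -1 else 1))
  = (rc (Num.sqrt (2:R)))^-1 * (if b then -1 else 1).
Proof.
rewrite rmorphM; congr (_ * _); first exact: conjv.
by case: b; [exact: rmorphN1 | exact: rmorph1].
Qed.

Lemma QE m : Q m = 2^-1 *: Qp m.
Proof.
apply/matrixP => r k; rewrite /Q summxE.
rewrite !big_ord_recr big_ord0 /= ?summxE ?big_ord_recr ?big_ord0 !mxE.
rewrite !big_ord1 !mxE !conj_vs.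
have hv := vv.
move: hv; set v := (rc (Num.sqrt (2:R)))^-1 => hv.
case: m => [[|[|[|//]]] ?]; case: r => [[|[|//]] ?]; case: k => [[|[|//]] ?];
rewrite /qv /ccoef /c2 /c3 /c1 /sgn1 /delta2 /=; ring: hv.
Qed.
Lemma commutE (A B : 'M[C]_2) r k : commut A B r k =
  A r 0 * B 0 k + A r 1 * B 1 k - (B r 0 * A 0 k + B r 1 * A 1 k).
Proof.
rewrite /commut !mxE !big_ord_recr !big_ord0 /= !add0r.
have e0 : widen_ord (leqnSn 1) (@ord_max 0) = 0 :> 'I_2 by apply: val_inj.
have e1 : (@ord_max 1) = 1 :> 'I_2 by apply: val_inj.
by rewrite e0 e1.
Qed.

Lemma gam2 : rc (gam theta) ^+ 2 = 1 - w ^+ 2.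
Proof. by rewrite -!rcX /gam /omega0 sin2cos2 rcB rc1. Qed.

Lemma sum_conj (P K : 'M[C]_2) (F : 'I_3 -> C) (G : 'I_3 -> 'M[C]_2) :
  \sum_(n < 3) F n *: (P *m G n *m K) = P *m (\sum_(n < 3) F n *: G n) *m K.
Proof.
rewrite mulmx_sumr mulmx_suml; apply: eq_bigr => n _.
by rewrite -scalemxAr -scalemxAl.
Qed.
End S.

Theorem mainTheorem2 (R : realType) (theta : R) :
  omega0 theta != 0 ->
  forall l m : 'I_3,
    commut (sigmag theta l) (sigmag theta m) =
    \sum_(n < 3) ((@Complex R 0 1) * levi R l m n *
                   (1 - rc (gam theta) ^+ 2 * (deltam2 n)%:R)) *: sigmag theta n.
Proof.
move=> hw l m.
have hw' := @w_neq0 R theta hw.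
have hI : 'i%C * 'i%C = -1 :> R[i] by rewrite -expr2 sqr_i.
rewrite !sigmagE commut_scale commut_conj //.
under eq_bigr do rewrite sigmagE scalerA.
rewrite sum_conj scalemxAl scalemxAr; congr (_ *m _ *m _).
rewrite !QE commut_scale gam2.
under eq_bigr do rewrite QE.
rewrite !big_ord_recr big_ord0 /= add0r.
apply/matrixP => r k.
rewrite scalerA [X in X = _]mxE commutE !mxE.
case: l => [[|[|[|//]]] ?]; case: m => [[|[|[|//]]] ?];
case: r => [[|[|//]] ?]; case: k => [[|[|//]] ?];
rewrite /qv /levi /deltam2 /= ?mulr1n ?mulr0n.
all: field: hI; by rewrite ?hw' ?pnatr_eq0.
Qed.
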